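(* Let $\mathcal{D}\subset Y\times Y$. The function $z\mapsto\operatorname{dist}(z,\mathcal{D})$ is $(p,q)$-coercive if and only if there are $c_1\in\mathbb{R}$ and $c_2>0$ such that $\mathcal{D}\subset\{(\epsilon,\tilde\sigma)\in Y\times Y: c_1\,\epsilon\cdot\tilde\sigma+c_2>|\epsilon|^p+|\tilde\sigma|^q\}$.
   Context: $1<p<\infty$, $q=p/(p-1)$, $Y=\{A\in\mathbb{R}^{d\times d}:A=A^T,\operatorname{tr}A=0\}$ with Frobenius product $\cdot$ and norm $|\cdot|$. $\operatorname{dist}((\epsilon,\tilde\sigma),\mathcal{D})=\inf_{(\epsilon',\tilde\sigma')\in\mathcal{D}}\big(\frac1p|\epsilon-\epsilon'|^p+\frac1q|\tilde\sigma-\tilde\sigma'|^q\big)$. A function $F:Y\times Y\to\mathbb{R}$ is $(p,q)$-coercive if there exist $C_1,C_2>0$, $\gamma\in\mathbb{R}$ with $F(\epsilon,\tilde\sigma)\ge C_1(|\epsilon|^p+|\tilde\sigma|^q)-C_2-\gamma\,\epsilon\cdot\tilde\sigma$ for all $(\epsilon,\tilde\sigma)$. *)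

(* Defs.v *)
From HB Require Import structures.
From mathcomp Require Import all_boot all_order all_algebra.
From mathcomp Require Import all_classical all_reals all_analysis.
Unset Printing Implicit Defensive.
Import Order.TTheory GRing.Theory Num.Theory.
Local Open Scope classical_set_scope.
Local Open Scope ring_scope.

Definition Ysym {R : realType} (d : nat) : set 'M[R]_d :=
  [set A | A^T = A /\ \tr A = 0].

Definition frob {R : realType} {d : nat} (A B : 'M[R]_d) : R :=
  \sum_(i < d) \sum_(j < d) A i j * B i j.
Definition frobn {R : realType} {d : nat} (A : 'M[R]_d) : R :=
  Num.sqrt (frob A A).

(* dist((e,s),D) = inf_{(e',s') in D} (1/p |e-e'|^p + 1/q |s-s'|^q),
   extended-real valued (= +oo when D is empty). *)
Definition distD {R : realType} {d : nat} (p q : R)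
    (D : set ('M[R]_d * 'M[R]_d)) (z : 'M[R]_d * 'M[R]_d) : \bar R :=
  ereal_inf [set ((p^-1 * (frobn (z.1 - w.1)) `^ p
                   + q^-1 * (frobn (z.2 - w.2)) `^ q)%:E) | w in D].

Definition pq_coercive {R : realType} {d : nat} (p q : R)
    (F : 'M[R]_d * 'M[R]_d -> \bar R) : Prop :=
  exists C1 C2 gamma : R, 0 < C1 /\ 0 < C2 /\
    forall e s : 'M[R]_d, Ysym d e -> Ysym d s ->
      ((C1 * ((frobn e) `^ p + (frobn s) `^ q) - C2 - gamma * frob e s)%:E
         <= F (e, s))%E.

(* Main.v *)
Require Import Defs.
From HB Require Import structures.
From mathcomp Require Import all_boot all_order all_algebra.
From mathcomp Require Import all_classical all_reals all_analysis.
From mathcomp Require Import ring lra.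
Import Order.TTheory GRing.Theory Num.Theory.
Local Open Scope classical_set_scope.
Local Open Scope ring_scope.
Section Frob.
Context {R : realType} {d : nat}.
Implicit Types A B C : 'M[R]_d.

Lemma frob_linl (t : R) A B C : frob (t *: A + B) C = t * frob A C + frob B C.
Proof.
rewrite /frob mulr_sumr -big_split; apply: eq_bigr => i _.
rewrite mulr_sumr -big_split; apply: eq_bigr => j _; rewrite !mxE /=; by rewrite mulrDl mulrA.
Qed.

Lemma frobC A B : frob A B = frob B A.
Proof. by apply: eq_bigr => i _; apply: eq_bigr => j _; rewrite mulrC. Qed.

Lemma frob_ge0 A : 0 <= frob A A.
Proof. by apply: sumr_ge0 => i _; apply: sumr_ge0 => j _; by rewrite -expr2 sqr_ge0. Qed.

Lemma frobDl A B C : frob (A + B) C = frob A C + frob B C.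
Proof.
rewrite /frob -big_split; apply: eq_bigr => i _.
rewrite -big_split; apply: eq_bigr => j _; rewrite !mxE /=; by rewrite mulrDl.
Qed.

Lemma frobDr A B C : frob C (A + B) = frob C A + frob C B.
Proof. by rewrite frobC frobDl !(frobC C). Qed.

Lemma frobZl t A C : frob (t *: A) C = t * frob A C.
Proof.
rewrite /frob mulr_sumr; apply: eq_bigr => i _.
rewrite mulr_sumr; apply: eq_bigr => j _; rewrite !mxE /=; by rewrite mulrA.
Qed.

Lemma frobNl A C : frob (- A) C = - frob A C.
Proof. by rewrite -scaleN1r frobZl mulN1r. Qed.

Lemma frobn_ge0 A : 0 <= frobn A.
Proof. exact: sqrtr_ge0. Qed.

Lemma frobn_sqr A : frobn A ^+ 2 = frob A A.
Proof. by rewrite /frobn sqr_sqrtr // frob_ge0. Qed.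

Lemma frob_quad t A B : 0 <= t ^+ 2 * frob A A - 2 * t * frob A B + frob B B.
Proof.
have := frob_ge0 (t *: A + (- B)).
rewrite frob_linl !frobDr !(frobC _ (t *: A)) !frobZl !(frobC _ (- B)) !frobNl (frobC B A).
have e1 : frob B (- B) = - frob B B by rewrite frobC frobNl.
rewrite e1 => h; nra.
Qed.

Lemma frob_CS A B : frob A B <= frobn A * frobn B.
Proof.
have hx := frob_ge0 A; have hy := frob_ge0 B.
have [x0|xpos] := eqVneq (frob A A) 0.
  rewrite /frobn x0 sqrtr0 mul0r.
  rewrite leNgt; apply/negP => zpos.
  have := frob_quad ((frob B B + 1) / (2 * frob A B)) A B.
  rewrite x0 mulr0 add0r.
  have -> : 2 * ((frob B B + 1) / (2 * frob A B)) * frob A B = frob B B + 1.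
    by field; rewrite gt_eqF.
  lra.
have xp : 0 < frob A A by rewrite lt_neqAle eq_sym xpos hx.
have := frob_quad (frob A B / frob A A) A B.
have -> : (frob A B / frob A A) ^+ 2 * frob A A - 2 * (frob A B / frob A A) * frob A B
   = - (frob A B ^+ 2 / frob A A) by field; rewrite gt_eqF.
move=> h.
have h2 : frob A B ^+ 2 <= frob A A * frob B B.
  have h1 : frob A B ^+ 2 / frob A A <= frob B B by lra.
  by rewrite -(ler_pM2l xp) mulrCA mulfV ?gt_eqF // mulr1 in h1.
rewrite /frobn -sqrtrM //.
rewrite (le_trans (ler_norm _)) // -sqrtr_sqr ler_sqrt //.
by apply: mulr_ge0.
Qed.

Lemma frob_abs A B : `|frob A B| <= frobn A * frobn B.
Proof.
rewrite ler_norml frob_CS andbT lerNl -frobNl.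
have -> : frobn A = frobn (- A).
  by rewrite /frobn frobNl frobC frobNl opprK.
exact: frob_CS.
Qed.

Lemma frobn_triangle A B : frobn (A + B) <= frobn A + frobn B.
Proof.
rewrite -ler_sqr ?nnegrE ?addr_ge0 ?frobn_ge0 //.
rewrite frobn_sqr frobDl !frobDr (frobC B A) sqrrD !frobn_sqr.
have := frob_CS A B; lra.
Qed.
End Frob.
Section Real.
Context {R : realType}.

Lemma young_basic {p q x y : R} : 1 < p -> q = p / (p - 1) -> 0 <= x -> 0 <= y ->
  x * y <= x `^ p + y `^ q.
Proof.
move=> hp hq hx hy.
have p0 : 0 < p by lra.
have p10 : 0 < p - 1 by lra.
have hq1 : q - 1 = (p - 1)^-1 by rewrite hq; field; lra.
have q10 : 0 < q - 1 by rewrite hq1 invr_gt0.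
have [hle|hlt] := leP y (x `^ (p - 1)).
  apply: (@le_trans _ _ (x `^ p)); last by rewrite lerDl powR_ge0.
  rewrite -mulr_powRB1 //; exact: ler_wpM2l.
apply: (@le_trans _ _ (y `^ q)); last by rewrite lerDr powR_ge0.
rewrite -(mulr_powRB1 hy) ?(lt_trans ltr01) //; last by lra.
rewrite mulrC; apply: ler_wpM2l => //.
have -> : x = (x `^ (p - 1)) `^ (q - 1).
  by rewrite -powRrM hq1 mulfV ?gt_eqF // powRr1.
apply: ge0_ler_powR; rewrite ?nnegrE ?powR_ge0 //; [exact: ltW | exact: ltW].
Qed.

Lemma young_r {p q x y r : R} : 1 < p -> q = p / (p - 1) -> 0 <= x -> 0 <= y ->
  0 < r -> x * y <= r `^ p * x `^ p + (r^-1) `^ q * y `^ q.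
Proof.
move=> hp hq hx hy hr.
have hri : 0 < r^-1 by rewrite invr_gt0.
have := @young_basic p q (r * x) (r^-1 * y) hp hq (mulr_ge0 (ltW hr) hx)
  (mulr_ge0 (ltW hri) hy).
rewrite !powRM ?invr_ge0 ?(ltW hr) //.
by rewrite mulrACA mulfV ?gt_eqF // mul1r.
Qed.

Lemma pow_tri {p u v : R} : 0 <= p -> 0 <= u -> 0 <= v ->
  (u + v) `^ p <= 2 `^ p * (u `^ p + v `^ p).
Proof.
move=> hp hu hv.
wlog huv : u v hu hv / u <= v.
  move=> W; have [h|h] := leP u v; first exact: W.
  by rewrite addrC (addrC (u `^ p)); apply: W => //; exact: ltW.
have : (u + v) `^ p <= (2 * v) `^ p.
  by apply: ge0_ler_powR; rewrite ?nnegrE; lra.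
rewrite powRM //.
move=> h; apply: (le_trans h); apply: ler_wpM2l; first exact: powR_ge0.
by rewrite lerDr powR_ge0.
Qed.
End Real.
Lemma final_ineq {R : realType} {p q c1 c2 k C1 Tp Tq rp rq ip iq X Y Aa Bb Ne Ns es' as' eb ab : R} :
  0 <= X -> 0 <= Y -> 0 <= Aa -> 0 <= Bb ->
  Ne <= Tp * (X + Aa) -> Ns <= Tq * (Y + Bb) ->
  X + Y < c1 * es' + c2 ->
  `|as'| <= rp * Aa + iq * Y -> `|eb| <= ip * X + rq * Bb -> `|ab| <= Aa + Bb ->
  0 < k -> 0 <= C1 ->
  C1 * Tp <= k / 2 -> C1 * Tq <= k / 2 ->
  `|c1| * ip <= 1/2 -> `|c1| * iq <= 1/2 ->
  C1 * Tp + k * `|c1| * (rp + 1) <= p^-1 ->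
  C1 * Tq + k * `|c1| * (rq + 1) <= q^-1 ->
  C1 * (Ne + Ns) - (k * c2 + 1) - k * c1 * (es' + as' + eb + ab)
    <= p^-1 * Aa + q^-1 * Bb.
Proof.
move=> hX hY hA hB F1 F2 F4 F5 F6 F7 hk hC1 B1 B1' B2 B2' B3 B3'.
set K := k * `|c1|.
have hK : 0 <= K by rewrite /K mulr_ge0 // ltW.
have S1 : C1 * Ne <= C1 * Tp * X + C1 * Tp * Aa.
  have := ler_wpM2l hC1 F1; lra.
have S2 : C1 * Ns <= C1 * Tq * Y + C1 * Tq * Bb.
  have := ler_wpM2l hC1 F2; lra.
have S3 : k * (X + Y) < k * (c1 * es' + c2) by rewrite ltr_pM2l.
have S4 : - (k * c1 * (as' + eb + ab)) <= K * (`|as'| + `|eb| + `|ab|).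
  apply: (le_trans (ler_norm _)).
  rewrite normrN !normrM (ger0_norm (ltW hk)) /K -mulrA.
  rewrite -mulrA; apply: ler_wpM2l; first exact: ltW.
  apply: ler_wpM2l; first exact: normr_ge0.
  apply: (le_trans (ler_normD _ _)); rewrite lerD2r; exact: ler_normD.
have S5 : K * (`|as'| + `|eb| + `|ab|) <=
    K * ((rp + 1) * Aa + (rq + 1) * Bb + ip * X + iq * Y).
  apply: ler_wpM2l => //; lra.
have S6 : (C1 * Tp + K * ip) * X <= k * X.
  apply: ler_wpM2r => //; rewrite /K -mulrA.
  have : k * (`|c1| * ip) <= k * (1/2) by rewrite ler_wpM2l // ltW.
  lra.
have S7 : (C1 * Tq + K * iq) * Y <= k * Y.
  apply: ler_wpM2r => //; rewrite /K -mulrA.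
  have : k * (`|c1| * iq) <= k * (1/2) by rewrite ler_wpM2l // ltW.
  lra.
have S8 : (C1 * Tp + K * (rp + 1)) * Aa <= p^-1 * Aa by apply: ler_wpM2r.
have S9 : (C1 * Tq + K * (rq + 1)) * Bb <= q^-1 * Bb by apply: ler_wpM2r.
lra.
Qed.

Theorem lemma5p9 (R : realType) (d : nat) (p q : R)
    (hp : 1 < p) (hq : q = p / (p - 1))
    (D : set ('M[R]_d * 'M[R]_d))
    (hD : D `<=` [set z | Ysym d z.1 /\ Ysym d z.2]) :
  pq_coercive p q (distD p q D) <->
  exists c1 c2 : R, 0 < c2 /\
    D `<=` [set z | Ysym d z.1 /\ Ysym d z.2 /\
                    (frobn z.1) `^ p + (frobn z.2) `^ q < c1 * frob z.1 z.2 + c2].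
Proof.
have p0 : 0 < p by lra.
have p10 : 0 < p - 1 by lra.
have q1 : 1 < q.
  rewrite hq -subr_gt0.
  have -> : p / (p - 1) - 1 = (p - 1)^-1 by field; lra.
  by rewrite invr_gt0.
have q0 : 0 < q by lra.
split.
- move=> [C1 [C2 [g [hC1 [hC2 H]]]]].
  exists (g / C1), (C2 / C1 + 1); split.
    by rewrite addr_gt0 // divr_gt0.
  move=> [e s] Dz; have [Ye Ys] := hD _ Dz; split => //; split => //=.
  have := H e s Ye Ys.
  have h0 : (distD p q D (e, s) <= 0)%E.
    apply: ereal_inf_le; exists 0%:E => //; exists (e, s) => //=.
    have f0 : frobn (0 : 'M[R]_d) = 0.
      rewrite /frobn.
      have -> : frob (0 : 'M[R]_d) 0 = 0.
        by rewrite -(scale0r (0 : 'M[R]_d)) frobZl mul0r.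
      exact: sqrtr0.
    by rewrite !subrr f0 !powR0 ?gt_eqF // !mulr0 addr0.
  move=> /le_trans /(_ h0); rewrite lee_fin => h1.
  have h2 : frobn e `^ p + frobn s `^ q <= g / C1 * frob e s + C2 / C1.
    rewrite -(ler_pM2l hC1).
    have -> : C1 * (g / C1 * frob e s + C2 / C1) = g * frob e s + C2.
      by field; rewrite gt_eqF.
    lra.
  lra.
- move=> [c1 [c2 [hc2 HD]]].
  set c := `|c1| + 1.
  have c1p : 1 <= c by rewrite /c lerDr normr_ge0.
  set r := 2 * c.
  have r0 : 0 < r by rewrite /r; lra.
  have ri1 : 0 < r^-1 <= 1.
    rewrite invr_gt0 r0 /= invf_le1 //; rewrite /r; lra.
  set rp := r `^ p. set rq := r `^ q.
  set ip := (r^-1) `^ p. set iq := (r^-1) `^ q.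
  have hip : ip <= r^-1 by apply: ge1r_powR => //; lra.
  have hiq : iq <= r^-1 by apply: ge1r_powR => //; lra.
  have hrp : 0 <= rp := powR_ge0 _ _.
  have hrq : 0 <= rq := powR_ge0 _ _.
  set U := rp + rq + 1.
  have U1 : 1 <= U by rewrite /U; lra.
  set k := (2 * c * U * (p + q))^-1.
  have k0 : 0 < k by rewrite invr_gt0; apply: mulr_gt0; [apply: mulr_gt0|]; lra.
  set Tp := 2 `^ p. set Tq := 2 `^ q.
  have Tp0 : 0 < Tp by apply: powR_gt0.
  have Tq0 : 0 < Tq by apply: powR_gt0.
  set L := Tp + Tq.
  set C1 := k / (2 * L).
  have C10 : 0 < C1 by rewrite divr_gt0 // /L; lra.
  have B1 : C1 * Tp <= k / 2.
    have -> : C1 * Tp = k / 2 - k * Tq / (2 * L) by rewrite /C1 /L; field; lra.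
    have : 0 <= k * Tq / (2 * L) by rewrite divr_ge0 ?mulr_ge0 // ?/L; lra.
    lra.
  have B1' : C1 * Tq <= k / 2.
    have -> : C1 * Tq = k / 2 - k * Tp / (2 * L) by rewrite /C1 /L; field; lra.
    have : 0 <= k * Tp / (2 * L) by rewrite divr_ge0 ?mulr_ge0 // ?/L; lra.
    lra.
  have cr : `|c1| * r^-1 <= 1/2.
    have n0 := normr_ge0 c1.
    have -> : `|c1| * r^-1 = 1/2 - r^-1 by rewrite /r /c; field; lra.
    have : 0 < r^-1 by rewrite invr_gt0.
    lra.
  have B2 : `|c1| * ip <= 1/2.
    apply: le_trans cr; apply: ler_wpM2l => //; exact: normr_ge0.
  have B2' : `|c1| * iq <= 1/2.
    apply: le_trans cr; apply: ler_wpM2l => //; exact: normr_ge0.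
  have kcU : k * c * U = (2 * (p + q))^-1 by rewrite /k; field; lra.
  have kle : k <= (2 * (p + q))^-1.
    rewrite -kcU -mulrA -{1}(mulr1 k) ler_wpM2l ?(ltW k0) //.
    by rewrite -(mulr1 1) ler_pM.
  have hpi : p^-1 = (p + q)^-1 + (p + q)^-1 * q / p by field; lra.
  have hqi : q^-1 = (p + q)^-1 + (p + q)^-1 * p / q by field; lra.
  have h2i : (2 * (p + q))^-1 = (p + q)^-1 / 2 by field; lra.
  have w1 : 0 <= (p + q)^-1 * q / p by rewrite divr_ge0 ?mulr_ge0 ?invr_ge0; lra.
  have w2 : 0 <= (p + q)^-1 * p / q by rewrite divr_ge0 ?mulr_ge0 ?invr_ge0; lra.
  have kc1 : k * `|c1| * (rp + 1) <= k * c * U.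
    rewrite -mulrA -(mulrA k c); apply: ler_wpM2l; first exact: ltW.
    apply: ler_pM; rewrite ?normr_ge0 /c /U; lra.
  have kc2 : k * `|c1| * (rq + 1) <= k * c * U.
    rewrite -mulrA -(mulrA k c); apply: ler_wpM2l; first exact: ltW.
    apply: ler_pM; rewrite ?normr_ge0 /c /U; lra.
  have B3 : C1 * Tp + k * `|c1| * (rp + 1) <= p^-1 by lra.
  have B3' : C1 * Tq + k * `|c1| * (rq + 1) <= q^-1 by lra.
  exists C1, (k * c2 + 1), (k * c1); split => //; split.
    have := mulr_gt0 k0 hc2; lra.
  move=> e s _ _; rewrite /distD; apply: le_ereal_inf_tmp => _ [[e' s'] Dw <-].
  rewrite lee_fin /=.
  have [_ [_ Hw]] := HD _ Dw; simpl in Hw.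
  set a := e - e'. set b := s - s'.
  have ee : e = e' + a by rewrite /a addrC subrK.
  have ss : s = s' + b by rewrite /b addrC subrK.
  have es : frob e s = frob e' s' + frob a s' + frob e' b + frob a b.
    rewrite {1}ee {1}ss frobDl !frobDr; lra.
  have F1 : frobn e `^ p <= Tp * (frobn e' `^ p + frobn a `^ p).
    apply: le_trans (pow_tri (ltW p0) (frobn_ge0 _) (frobn_ge0 _)).
    apply: ge0_ler_powR; rewrite ?nnegrE ?frobn_ge0 ?addr_ge0 ?frobn_ge0 //; first lra.
    rewrite {1}ee; exact: frobn_triangle.
  have F2 : frobn s `^ q <= Tq * (frobn s' `^ q + frobn b `^ q).
    apply: le_trans (pow_tri (ltW q0) (frobn_ge0 _) (frobn_ge0 _)).
    apply: ge0_ler_powR; rewrite ?nnegrE ?frobn_ge0 ?addr_ge0 ?frobn_ge0 //; first lra.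
    rewrite {1}ss; exact: frobn_triangle.
  have F5 : `|frob a s'| <= rp * frobn a `^ p + iq * frobn s' `^ q.
    apply: le_trans (frob_abs _ _) _.
    exact: young_r hp hq (frobn_ge0 _) (frobn_ge0 _) r0.
  have F6 : `|frob e' b| <= ip * frobn e' `^ p + rq * frobn b `^ q.
    apply: le_trans (frob_abs _ _) _.
    have rI : 0 < r^-1 by rewrite invr_gt0.
    have := young_r hp hq (frobn_ge0 e') (frobn_ge0 b) rI.
    by rewrite invrK.
  have F7 : `|frob a b| <= frobn a `^ p + frobn b `^ q.
    apply: le_trans (frob_abs _ _) _.
    exact: young_basic hp hq (frobn_ge0 _) (frobn_ge0 _).
  rewrite es.
  have := final_ineq (powR_ge0 (frobn e') p) (powR_ge0 (frobn s') q)
    (powR_ge0 (frobn a) p) (powR_ge0 (frobn b) q) F1 F2 Hw F5 F6 F7 k0 (ltW C10)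
    B1 B1' B2 B2' B3 B3'.
  by [].
Qed.
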